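(* Let $n\ge2$, let $\mathcal{P}$ be a distribution on $\mathcal{Z}$, let $\mathcal{A}:\mathcal{Z}^{n-1}\to\mathcal{W}\subseteq\mathbb{R}^K$ be a deterministic algorithm and let $\ell:\mathcal{W}\times\mathcal{Z}\to[0,1]$ be a loss that is $L$-Lipschitz in the weights, i.e. $|\ell(w,z)-\ell(w',z)|\le L\|w-w'\|$ for all $w,w',z$ (with $\ell$ extended to all of $\mathbb{R}^K$ with the same properties so that noisy weights can be evaluated). If $\mathcal{A}$ has $\epsilon$-weight stability relative to a positive definite matrix $\Sigma$, then \[ \mathrm{gen}(\mathcal{A})\le\sqrt{4c_n\,\epsilon\, L\sqrt{\mathrm{tr}(\Sigma)}},\qquad c_n=\frac{n}{n-1}. \]
   Context: $\mathcal{A}$ has $\epsilon$-weight stability relative to $\Sigma$ if for all $z^{n-1},\hat z^{n-1}\in\mathcal{Z}^{n-1}$ differing in at most one entry, $a=\mathcal{A}(z^{n-1})-\mathcal{A}(\hat z^{n-1})$ satisfies $a^T\Sigma^{-1}a\le\epsilon^2$. True loss $\mathcal{L}(w)=\mathbb{E}_{Z'\sim\mathcal{P}}\ell(w,Z')$, empirical loss $\widehat{\mathcal{L}}(w,z^m)=\frac1m\sum_i\ell(w,z_i)$, and $\mathrm{gen}(\mathcal{A})=|\mathbb{E}_{Z^{n-1}\sim\mathcal{P}^{n-1}}[\mathcal{L}(\mathcal{A}(Z^{n-1}))-\widehat{\mathcal{L}}(\mathcal{A}(Z^{n-1}),Z^{n-1})]|$.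
   Formalization: For every v ∈ ℝᴷ the map (zⁿ⁻¹, z) ↦ ℓ(𝒜(zⁿ⁻¹) + v, z) on 𝒵ⁿ⁻¹ × 𝒵 is also assumed measurable, and ε ≥ 0 is assumed as well. Apart from conventions, each condition added here is assumed in the paper as well or is needed for the statement above to hold. *)

(* Defs.v *)
From HB Require Import structures.
From mathcomp Require Import all_boot all_order all_algebra.
From mathcomp Require Import all_classical all_reals all_analysis.
Set Implicit Arguments. Unset Strict Implicit. Unset Printing Implicit Defensive.
Import Order.TTheory GRing.Theory Num.Theory.
Local Open Scope classical_set_scope.
Local Open Scope ring_scope.

Definition eucl_norm (R : realType) (K : nat) (w : 'rV[R]_K) : R :=
  Num.sqrt (\sum_(i < K) w 0 i ^+ 2).

Definition posdef (R : realType) (K : nat) (S : 'M[R]_K) : Prop :=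
  S^T = S /\ forall x : 'rV[R]_K, x != 0 -> 0 < (x *m S *m x^T) 0 0.

Definition differ_at_most_one (T : Type) (m : nat) (z zh : m.-tuple T) : Prop :=
  exists i : 'I_m, forall j : 'I_m, j != i -> tnth z j = tnth zh j.

(* epsilon-weight stability of A relative to Sigma:  a^T Sigma^-1 a <= eps^2
   (a written as a row vector, so a^T Sigma^-1 a = (a *m Sigma^-1 *m a^T) 0 0). *)
Definition weight_stable (R : realType) (T : Type) (m K : nat)
    (A : m.-tuple T -> 'rV[R]_K) (S : 'M[R]_K) (eps : R) : Prop :=
  forall z zh : m.-tuple T, differ_at_most_one z zh ->
    let a := A z - A zh in (a *m invmx S *m a^T) 0 0 <= eps ^+ 2.

(* Pm is the product probability P^{(x) m} on m.-tuple Z: it is characterized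
   (pi-lambda) by its values on measurable rectangles. *)
Definition is_product_prob (d : measure_display) (Z : measurableType d)
    (R : realType) (m : nat) (P : probability Z R)
    (Pm : probability (m.-tuple Z) R) : Prop :=
  forall B : 'I_m -> set Z, (forall i, measurable (B i)) ->
    Pm [set x | forall i, B i (tnth x i)] = (\prod_(i < m) P (B i))%E.

Definition true_loss (d : measure_display) (Z : measurableType d)
    (R : realType) (K : nat) (P : probability Z R)
    (loss : 'rV[R]_K -> Z -> R) (w : 'rV[R]_K) : R :=
  Rintegral P setT (loss w).

Definition emp_loss (R : realType) (T : Type) (K m : nat)
    (loss : 'rV[R]_K -> T -> R) (w : 'rV[R]_K) (z : m.-tuple T) : R :=
  (m%:R)^-1 * \sum_(i < m) loss w (tnth z i).

Definition gen (d : measure_display) (Z : measurableType d)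
    (R : realType) (K m : nat) (P : probability Z R)
    (Pm : probability (m.-tuple Z) R)
    (loss : 'rV[R]_K -> Z -> R) (A : m.-tuple Z -> 'rV[R]_K) : R :=
  `| Rintegral Pm setT
        (fun x => true_loss P loss (A x) - emp_loss loss (A x) x) |.

(* Main.v *)
Set Warnings "-redundant-canonical-projection,-notation-overridden,-ambiguous-paths,-notation-incompatible-prefix,-deprecated".
Require Import Defs.
From HB Require Import structures.
From mathcomp Require Import all_boot all_order all_algebra.
From mathcomp Require Import all_classical all_reals all_analysis.
From mathcomp Require Import ring lra measurable_realfun.
Import Order.TTheory GRing.Theory Num.Theory.
Local Open Scope classical_set_scope.
Local Open Scope ring_scope.
Section Mat.
Variables (R : realType) (K : nat) (S : 'M[R]_K).
Hypothesis hS : posdef S.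

Let q (x y : 'rV[R]_K) := (x *m S *m y^T) 0 0.

Lemma q_ge0 x : 0 <= q x x.
Proof.
have [->|x0] := eqVneq x 0; first by rewrite /q !mul0mx mxE.
by apply/ltW; apply hS.2.
Qed.

Lemma q_sym x y : q x y = q y x.
Proof.
rewrite /q; transitivity ((x *m S *m y^T)^T 0 0); first by rewrite [RHS]mxE.
by rewrite !trmx_mul trmxK hS.1 mulmxA.
Qed.

Lemma S_unit : S \in unitmx.
Proof.
rewrite -row_free_unit; apply: inj_row_free => v hv.
apply/eqP; apply/negPn/negP => v0.
have := hS.2 v v0; by rewrite hv mul0mx mxE ltxx.
Qed.

Lemma mat_bound (a : 'rV[R]_K) :
  \sum_(k < K) a 0 k ^+ 2 <= (a *m invmx S *m a^T) 0 0 * \tr S.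
Proof.
set b := a *m invmx S.
have ab : a = b *m S by rewrite /b -mulmxA mulVmx ?mulmx1 // S_unit.
have qbb : q b b = (a *m invmx S *m a^T) 0 0.
  rewrite /q /b trmx_mul trmx_inv hS.1.
  by rewrite -(mulmxA a (invmx S) S) mulVmx ?S_unit // mulmx1 mulmxA.
rewrite -qbb /mxtrace mulr_sumr; apply: ler_sum => k _.
have qbk : q b (delta_mx 0 k) = a 0 k.
  by rewrite /q trmx_delta -colE mxE ab.
have qkk : q (delta_mx 0 k) (delta_mx 0 k) = S k k.
  by rewrite /q trmx_delta -colE mxE -rowE mxE.
have [bz|bnz] := eqVneq b 0.
  rewrite ab bz mul0mx mxE expr0n /= /q !mul0mx mxE mul0r //.
have qpos : 0 < q b b by apply hS.2.
pose s := a 0 k / q b b.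
have := q_ge0 (s *: b - delta_mx 0 k).
have expand : q (s *: b - delta_mx 0 k) (s *: b - delta_mx 0 k) =
   s ^+ 2 * q b b - 2 * s * q b (delta_mx 0 k) + q (delta_mx 0 k) (delta_mx 0 k).
  have qs := q_sym 'e_k b; rewrite /q in qs *.
  rewrite linearB linearZ /= !mulmxBl !mulmxBr -!scalemxAl -!scalemxAr !mxE; rewrite !mxE in qs; rewrite qs.
  ring.
rewrite expand qbk qkk /s; move: qpos; set c := q b b; set x := a 0 k => qpos.
have c0 : c != 0 by rewrite lt0r_neq0.
have -> : (x / c) ^+ 2 * c - 2 * (x / c) * x + S k k = S k k - x^+2/c by field.
rewrite subr_ge0 => h.
have -> : x^+2 = c * (x^+2 / c) by field.
by rewrite ler_wpM2l // ltW.
Qed.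

Lemma tr_ge0 : 0 <= \tr S.
Proof.
rewrite /mxtrace; apply: sumr_ge0 => k _.
by have := q_ge0 (delta_mx 0 k); rewrite /q trmx_delta -colE mxE -rowE mxE.
Qed.

Lemma norm_bound (a : 'rV[R]_K) (eps : R) : 0 <= eps ->
  (a *m invmx S *m a^T) 0 0 <= eps ^+ 2 -> eucl_norm a <= eps * Num.sqrt (\tr S).
Proof.
move=> e0 ha; rewrite /eucl_norm.
have h : \sum_(k < K) a 0 k ^+ 2 <= eps ^+ 2 * \tr S.
  exact: le_trans (mat_bound a) (ler_wpM2r tr_ge0 ha).
apply: le_trans (ler_wsqrtr h) _.
by rewrite sqrtrM ?sqr_ge0 // sqrtr_sqr ger0_norm.
Qed.
End Mat.
Section Gen.
Context {R : realType} {dT : measure_display} {T : measurableType dT}.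
Variable mu : probability T R.

Lemma mu_lt : (mu setT < +oo)%E.
Proof. by rewrite probability_setT ltry. Qed.

Lemma bint (f : T -> R) (c : R) : measurable_fun setT f ->
  (forall x, `|f x| <= c) -> mu.-integrable setT (EFin \o f).
Proof.
move=> mf hf; apply: measurable_bounded_integrable => //.
  exact: mu_lt.
exists c; split; first by rewrite num_real.
by move=> M cM x _; apply: le_trans (hf x) (ltW cM).
Qed.

Lemma Rint_cst (c : R) : Rintegral mu setT (fun=> c) = c.
Proof.
rewrite Rintegral_cst //; change (c * fine (mu setT) = c).
by rewrite probability_setT /= mulr1.
Qed.

Lemma Rint_abs_le (f : T -> R) (c : R) : measurable_fun setT f ->
  (forall x, `|f x| <= c) -> `|Rintegral mu setT f| <= c.
Proof.
move=> mf hf.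
apply: le_trans (le_normr_Rintegral _ _) _ => //; first exact: bint hf.
apply: le_trans (le_Rintegral (f2 := fun=> c) _ _ _ _) _ => //.
- apply: (bint _ (c)); first exact: measurableT_comp.
  by move=> x; rewrite normr_id.
- apply: (bint _ (`|c|)); first exact: measurable_cst.
  by move=> x.
- by rewrite Rint_cst.
Qed.

Lemma Rint_sum (I : eqType) (s : seq I) (f : I -> T -> R) (c : R) :
  (forall j, measurable_fun setT (f j)) -> (forall j x, `|f j x| <= c) ->
  Rintegral mu setT (fun x => \sum_(j <- s) f j x) = \sum_(j <- s) Rintegral mu setT (f j).
Proof.
move=> mf hf; elim: s => [|j s ih].
  by rewrite big_nil; under eq_Rintegral do rewrite big_nil; rewrite Rint_cst.
rewrite big_cons; under eq_Rintegral do rewrite big_cons.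
rewrite RintegralD //; first by rewrite ih.
  exact: bint (hf j).
apply: (bint _ ((size s)%:R * c)); first exact: measurable_sum.
move=> x; apply: le_trans (ler_norm_sum _ _ _) _.
rewrite -sum1_size natr_sum mulr_suml; apply: ler_sum => k _.
by rewrite mul1r.
Qed.
End Gen.
Section Meas.
Context {R : realType} {d : measure_display} {Z : measurableType d} {m : nat}.
Variables (P : probability Z R) (Pn : probability (m.-tuple Z) R).
Hypothesis hPn : is_product_prob P Pn.

Definition upd (x : m.-tuple Z) (i : 'I_m) (z : Z) : m.-tuple Z :=
  [tuple (if j == i then z else tnth x j) | j < m].

Lemma tnth_upd x i z j : tnth (upd x i z) j = if j == i then z else tnth x j.
Proof. by rewrite tnth_mktuple. Qed.

Definition swp (i : 'I_m) (p : m.-tuple Z * Z) : m.-tuple Z * Z :=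
  (upd p.1 i p.2, tnth p.1 i).

Lemma measurable_upd i : measurable_fun setT (fun p : m.-tuple Z * Z => upd p.1 i p.2).
Proof.
apply/measurable_fun_tnthP => j.
rewrite (_ : _ \o _ = if j == i then snd else (fun x : m.-tuple Z => tnth x j) \o fst); last first.
  by apply/funext => p /=; rewrite tnth_upd; case: (j == i).
case: (j == i); first exact: (@measurable_snd _ _ (m.-tuple Z) Z).
exact: (measurableT_comp (measurable_tnth j) measurable_fst).
Qed.

Lemma measurable_swp i : measurable_fun setT (swp i).
Proof.
apply: measurable_fun_pair; first exact: measurable_upd.
exact: (measurableT_comp (measurable_tnth i) measurable_fst).
Qed.

Variable i : 'I_m.
Definition pmu := pushforward (Pn \x P)%E (swp i).

Let pmu0 : pmu set0 = 0%E.
Proof. by rewrite /pmu /pushforward preimage_set0 measure0. Qed.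

Let pmu_ge0 A : (0 <= pmu A)%E.
Proof. exact: (measure_ge0 (Pn \x P)%E). Qed.

Let pmu_sigma_additive : semi_sigma_additive pmu.
Proof.
move=> F mF tF mUF; rewrite /pmu /pushforward preimage_bigcup.
apply: measure_semi_sigma_additive.
- by move=> n; rewrite -[X in measurable X]setTI; exact: measurable_swp.
- apply/trivIsetP => /= k j _ _ kj; rewrite -preimage_setI.
  by move/trivIsetP : tF => /(_ _ _ _ _ kj) ->//; rewrite preimage_set0.
- by rewrite -preimage_bigcup -[X in measurable X]setTI; exact: measurable_swp.
Qed.

HB.instance Definition _ := isMeasure.Build _ _ _ pmu pmu0 pmu_ge0 pmu_sigma_additive.

Definition box (B : 'I_m -> set Z) : set (m.-tuple Z) := [set x | forall j, B j (tnth x j)].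
Definition Gs : set (set (m.-tuple Z * Z)) := [set X | exists B : 'I_m -> set Z,
  (forall j, measurable (B j)) /\ exists C : set Z, measurable C /\ X = box B `*` C].

Lemma box_meas B : (forall j, measurable (B j)) -> measurable (box B).
Proof.
move=> mB.
have -> : box B = \bigcap_(j in [set: 'I_m]) ((fun x => tnth x j) @^-1` B j).
  by apply/seteqP; split => x /= h j; [move=> _; exact: (h j) | exact: (h j)].

apply: fin_bigcap_measurable; first exact: finite_finset.
move=> j _; rewrite -[X in measurable X]setTI.
exact: (measurable_tnth j measurableT (mB j)).
Qed.

Lemma Gs_meas : Gs `<=` measurable.
Proof. by move=> _ [B [mB [C [mC ->]]]]; apply: measurableX => //; exact: box_meas. Qed.

Lemma Gs_setI : setI_closed Gs.
Proof.
move=> _ _ [B [mB [C [mC ->]]]] [B' [mB' [C' [mC' ->]]]].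
exists (fun j => B j `&` B' j); split; first by move=> j; exact: measurableI.
exists (C `&` C'); split; first exact: measurableI.
rewrite -setXI; congr (_ `*` _); apply/seteqP; split => x /=.
  by move=> [h1 h2] j; split.
by move=> h; split => j; have [] := h j.
Qed.

Lemma Gs_T : Gs setT.
Proof.
exists (fun _ => setT); split => //; exists setT; split => //.
by rewrite -setXTT; congr (_ `*` _); apply/seteqP; split.
Qed.

Lemma Gs_gen X : measurable X -> <<s Gs >> X.
Proof.
move: X; rewrite measurable_prod_measurableType.
apply: smallest_sub; first exact: smallest_sigma_algebra.
move=> _ [A mA [C mC <-]].
have [s0 sC sU] := smallest_sigma_algebra setT Gs.
have GC : <<s Gs >> (setT `*` C).
  apply: sub_sigma_algebra; exists (fun _ => setT); split => //; exists C; split => //.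
  by congr (_ `*` _); apply/seteqP; split.
pose H := [set A : set (m.-tuple Z) | <<s Gs >> (A `*` C)].
suff : (@measurable _ (m.-tuple Z)) `<=` H by move/(_ A mA).
apply: smallest_sub.
- split.
  + by rewrite /H /= set0X.
    move=> B HB; rewrite /H /=.
    have -> : ([set: m.-tuple Z] `\` B) `*` C = ([set: m.-tuple Z] `*` C) `\` (B `*` C).
      apply/seteqP; split => -[x z] /=.
        by move=> [[_ nB] Cz]; split => // -[].
      by move=> [[_ Cz] h]; split => //; split => // Bx; apply: h.
    exact: (@measurableD _ (g_sigma_algebraType Gs)).
  + move=> F HF; rewrite /H /= setX_bigcupl; exact: sU.
- move=> X; rewrite -bigcup_seq => -[j _ [Bj mBj <-]].
  rewrite /H /=; apply: sub_sigma_algebra.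
  exists (fun k => if k == j then Bj else setT); split.
    by move=> k; case: (k == j).
  exists C; split => //; congr (_ `*` _); apply/seteqP; split => x /=.
    by move=> [_ h] k; case: eqP => // ->.
  by move=> h; split => //; have := h j; rewrite eqxx.
Qed.


Lemma pmu_G A : Gs A -> pmu A = (Pn \x P)%E A.
Proof.
move=> [B [mB [C [mC ->]]]].
pose B' := fun j => if j == i then C else B j.
have mB' : forall j, measurable (B' j) by move=> j; rewrite /B'; case: (j == i).
have -> : pmu (box B `*` C) = (Pn \x P)%E (box B' `*` B i).
  rewrite /pmu /pushforward; congr ((Pn \x P)%E _).
  apply/seteqP; split => -[x z] /= [h1 h2]; split.
  - move=> j; rewrite /B'; case: eqP => [->|/eqP ji] //.
    by have := h1 j; rewrite tnth_upd (negbTE ji).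
  - by have := h1 i; rewrite tnth_upd eqxx.
  - move=> j; rewrite tnth_upd; case: eqP => [->|/eqP ji] //.
    by have := h1 j; rewrite /B' (negbTE ji).
  - by have := h1 i; rewrite /B' eqxx.
rewrite !product_measure1E //; try exact: box_meas.
have e1 : Pn (box B) = (\prod_(j < m) P (B j))%E := hPn B mB.
have e2 : Pn (box B') = (\prod_(j < m) P (B' j))%E := hPn B' mB'.
transitivity ((\prod_(j < m) P (B' j)) * P (B i))%E; first by congr (_ * _)%E; exact: e2.
transitivity ((\prod_(j < m) P (B j)) * P C)%E; last by congr (_ * _)%E; exact/esym/e1.
rewrite (bigD1 i) //= [in RHS](bigD1 i) //= /B' eqxx.
rewrite (eq_bigr (fun j => P (B j))); last by move=> j /negbTE ->.
set p := (\prod_(i0 < m | i0 != i) P (B i0))%E.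
by rewrite -!muleA (muleC p (P (B i))) (muleC p (P C)) !muleA (muleC (P C)).
Qed.

Lemma pmu_eq X : measurable X -> pmu X = (Pn \x P)%E X.
Proof.
move=> mX.
have cov : \bigcup_(k : nat) [set: m.-tuple Z * Z] = setT.
  by apply/seteqP; split => // x _; exists 0%N.
have goo : forall k : nat, (pmu ((fun=> [set: m.-tuple Z * Z]) k) < +oo)%E.
  move=> _; rewrite /pmu /pushforward preimage_setT -setXTT product_measure1E //.
  have h : (Pn setT * P setT = 1)%E by rewrite !probability_setT mule1.
  apply: (@le_lt_trans _ _ 1%E); last exact: ltry.
  by rewrite le_eqVlt; apply/orP; left; apply/eqP; exact: h.
have HH := (@g_sigma_algebra_measure_unique _ R _ Gs Gs_meas (fun=> setT) (fun=> Gs_T) cov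
  pmu (Pn \x P)%E Gs_setI pmu_G goo X (Gs_gen X mX)).
exact: HH.
Qed.

Lemma swp_int (f : m.-tuple Z * Z -> R) (c : R) : measurable_fun setT f ->
  (forall p, `|f p| <= c) ->
  Rintegral (Pn \x P)%E setT (f \o swp i) = Rintegral (Pn \x P)%E setT f.
Proof.
move=> mf hf; rewrite /Rintegral; congr fine.
have mEf := mf; move/measurable_EFinP in mEf.
have intf : (Pn \x P)%E.-integrable (swp i @^-1` setT) ((EFin \o f) \o swp i).
  rewrite preimage_setT (_ : (EFin \o f) \o swp i = EFin \o (f \o swp i)) //; apply: (bint (Pn \x P)%E _ c).
    exact: measurableT_comp mf (measurable_swp i).
  by move=> p; exact: hf.
have := integral_pushforward (measurable_swp i) mEf intf measurableT.
rewrite preimage_setT => h.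
transitivity (\int[pmu]_(y in setT) (EFin \o f) y)%E; first by rewrite [RHS]h.
apply: eq_measure_integral => A mA _; exact: pmu_eq.
Qed.
End Meas.

Section Fub.
Context {R : realType} {d : measure_display} {Z : measurableType d} {m : nat}.
Variables (P : probability Z R) (Pn : probability (m.-tuple Z) R).

Lemma fubini_R (f : m.-tuple Z * Z -> R) (c : R) : measurable_fun setT f ->
  (forall p, `|f p| <= c) ->
  Rintegral Pn setT (fun x => Rintegral P setT (fun z => f (x, z))) =
  Rintegral (Pn \x P)%E setT f.
Proof.
move=> mf hf.
have intf : (Pn \x P)%E.-integrable setT (EFin \o f) := bint _ _ _ mf hf.
rewrite /Rintegral -(integral12_prod_meas1 intf); congr fine.
apply: eq_integral => x _; rewrite /fubini_F.
have ix : P.-integrable setT (EFin \o (fun z => f (x, z))).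
  apply: (bint P _ c); first exact: measurable_fun_pair2.
  by move=> z; exact: hf.
by rewrite fineK // integrable_fin_num.
Qed.
End Fub.

Section Main.
Context {R : realType} {d : measure_display} {Z : measurableType d} {m : nat}.
Variables (P : probability Z R) (Pn : probability (m.-tuple Z) R).
Hypothesis hPn : is_product_prob P Pn.
Variable F : m.-tuple Z * Z -> R.
Hypothesis mF : measurable_fun setT F.
Hypothesis F01 : forall p, 0 <= F p <= 1.

Lemma meas_Fi i : measurable_fun setT (fun p : m.-tuple Z * Z => F (p.1, tnth p.1 i)).
Proof.
exact: (measurableT_comp (f := F) (g := fun p : m.-tuple Z * Z => (p.1, tnth p.1 i)) mF
  (measurable_fun_pair (f := fst) (g := (fun x : m.-tuple Z => tnth x i) \o fst)
     measurable_fst (measurableT_comp (measurable_tnth i) measurable_fst))).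
Qed.

Lemma meas_Gi i : measurable_fun setT (fun p : m.-tuple Z * Z => F (upd p.1 i p.2, p.2)).
Proof.
exact: (measurableT_comp (f := F) (g := fun p : m.-tuple Z * Z => (upd p.1 i p.2, p.2)) mF
  (measurable_fun_pair (f := fun p : m.-tuple Z * Z => upd p.1 i p.2) (g := snd)
     (measurable_upd i) measurable_snd)).
Qed.

Lemma upd_upd (x : m.-tuple Z) i z : upd (upd x i z) i (tnth x i) = x.
Proof. by apply: eq_from_tnth => j; rewrite !tnth_upd; case: eqP => // ->. Qed.

Lemma absB01 (a b : R) : 0 <= a <= 1 -> 0 <= b <= 1 -> `|a - b| <= 1.
Proof.
move=> /andP[a0 a1] /andP[b0 b1]; rewrite ler_norml; apply/andP; split; lra.
Qed.

Lemma absF p : `|F p| <= 1.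
Proof. by have /andP[a b] := F01 p; rewrite ger0_norm. Qed.

Let avg (x : m.-tuple Z) := m%:R^-1 * \sum_(i < m) F (x, tnth x i).

Lemma avg01 x : (0 < m)%N -> 0 <= avg x <= 1.
Proof.
move=> m0; rewrite /avg; apply/andP; split.
  by apply: mulr_ge0; [rewrite invr_ge0 ler0n | apply: sumr_ge0 => i _; have /andP[] := F01 (x, tnth x i)].
rewrite ler_pdivrMl ?ltr0n // mulr1.
apply: le_trans (_ : \sum_(i < m) (1 : R) <= _).
  by apply: ler_sum => i _; have /andP[] := F01 (x, tnth x i).
by rewrite sumr_const card_ord.
Qed.

Lemma key_identity : (0 < m)%N ->
  Rintegral Pn setT (fun x => Rintegral P setT (fun z => F (x, z)) - avg x) =
  m%:R^-1 * \sum_(i < m) Rintegral (Pn \x P)%E setT (fun p => F p - F (upd p.1 i p.2, p.2)).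
Proof.
move=> m0.
have mavg : measurable_fun setT (fun p : m.-tuple Z * Z => avg p.1).
  rewrite /avg; apply: (measurable_funM (f := cst _)) => //.
  by apply: measurable_sum => i; exact: meas_Fi.
have habs p : `|F p - avg p.1| <= 1 := absB01 _ _ (F01 p) (avg01 p.1 m0).
have mH : measurable_fun setT (fun p : m.-tuple Z * Z => F p - avg p.1).
  exact: measurable_funB.
have step1 : Rintegral Pn setT (fun x => Rintegral P setT (fun z => F (x, z)) - avg x) =
    Rintegral Pn setT (fun x => Rintegral P setT (fun z => F (x, z) - avg (x, z).1)).
  apply: eq_Rintegral => x _ /=.
  rewrite RintegralB //.
  - by rewrite Rint_cst.
  - exact: (bint P _ 1 (measurable_fun_pair2 x mF) (fun z => absF _)).
  - exact: (bint P _ `|avg x| (measurable_cst _) (fun _ => le_refl _)).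
rewrite step1 (fubini_R P Pn _ _ mH habs).
have intF := bint (Pn \x P)%E F 1 mF absF.
have absavg (p : m.-tuple Z * Z) : `|avg p.1| <= 1.
  by have /andP[a b] := avg01 p.1 m0; rewrite ger0_norm.
have intavg := bint (Pn \x P)%E _ 1 mavg absavg.
rewrite RintegralB //.
have eavg : Rintegral (Pn \x P)%E setT (fun p => avg p.1) =
    m%:R^-1 * \sum_(i < m) Rintegral (Pn \x P)%E setT (fun p => F (p.1, tnth p.1 i)).
  rewrite /avg RintegralZl //.
    congr (_ * _).
    have := Rint_sum (Pn \x P)%E _ (index_enum _) (fun i (p : m.-tuple Z * Z) => F (p.1, tnth p.1 i)) 1 (fun i => meas_Fi i) (fun i p => absF _).
    by move=> hh; exact: hh.
  apply: (bint (Pn \x P)%E _ m%:R).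
    by apply: measurable_sum => i; exact: meas_Fi.
  move=> p; apply: le_trans (ler_norm_sum _ _ _) _.
  apply: le_trans (ler_sum _ (fun i _ => absF (p.1, tnth p.1 i))) _.
  by rewrite sumr_const card_ord.
have eFG i : Rintegral (Pn \x P)%E setT (fun p => F (p.1, tnth p.1 i)) =
    Rintegral (Pn \x P)%E setT (fun p => F (upd p.1 i p.2, p.2)).
  rewrite -(swp_int P Pn hPn i _ 1 (meas_Gi i) (fun p => absF _)).
  by apply: eq_Rintegral => p _ /=; rewrite upd_upd.
have eB i : Rintegral (Pn \x P)%E setT (fun p => F p - F (upd p.1 i p.2, p.2)) =
    Rintegral (Pn \x P)%E setT F - Rintegral (Pn \x P)%E setT (fun p => F (upd p.1 i p.2, p.2)).
  exact: (RintegralB measurableT intF (bint (Pn \x P)%E _ 1 (meas_Gi i) (fun p => absF _))).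
rewrite (eq_bigr _ (fun i _ => eB i)) sumrB sumr_const card_ord eavg.
rewrite (eq_bigr _ (fun i _ => eFG i)).
have mn0 : m%:R != 0 :> R by rewrite pnatr_eq0 -lt0n.
rewrite -mulr_natr; field.
exact: mn0.
Qed.

Lemma gen_bound (B : R) : (0 < m)%N ->
  (forall p i, `|F p - F (upd p.1 i p.2, p.2)| <= B) ->
  `|Rintegral Pn setT (fun x => Rintegral P setT (fun z => F (x, z)) - avg x)| <= B.
Proof.
move=> m0 hB; rewrite key_identity // normrM.
have mn0 : 0 < m%:R :> R by rewrite ltr0n.
rewrite ger0_norm; last by rewrite invr_ge0 ltW.
rewrite mulrC ler_pdivrMr // mulrC.
apply: le_trans (ler_norm_sum _ _ _) _.
apply: le_trans (ler_sum _ (fun i _ => Rint_abs_le (Pn \x P)%E _ B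
   (measurable_funB mF (meas_Gi i)) (fun p => hB p i))) _.
by rewrite sumr_const card_ord mulr_natl.
Qed.
End Main.

Theorem theorem4 (R : realType) (d : measure_display) (Z : measurableType d)
  (n K : nat) (hn : (2 <= n)%N)
  (P : probability Z R) (Pn : probability ((n.-1).-tuple Z) R)
  (hPn : is_product_prob P Pn)
  (A : (n.-1).-tuple Z -> 'rV[R]_K)
  (loss : 'rV[R]_K -> Z -> R)
  (hloss01 : forall w z, 0 <= loss w z <= 1)
  (L : R)
  (hLip : forall w w' z, `|loss w z - loss w' z| <= L * eucl_norm (w - w'))
  (hmeas : forall v : 'rV[R]_K,
      measurable_fun [set: (n.-1).-tuple Z * Z] (fun p => loss (A p.1 + v) p.2))
  (Sigma : 'M[R]_K) (hSigma : posdef Sigma)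
  (eps : R) (heps : 0 <= eps)
  (hstab : weight_stable A Sigma eps) :
  gen P Pn loss A <=
    Num.sqrt (4 * (n%:R / (n.-1)%:R) * eps * L * Num.sqrt (\tr Sigma)).
Proof.
have m0 : (0 < n.-1)%N by rewrite -subn1 subn_gt0.
pose F := fun p : (n.-1).-tuple Z * Z => loss (A p.1) p.2.
have mF : measurable_fun setT F.
  have -> : F = (fun p => loss (A p.1 + 0) p.2) by apply/funext => p; rewrite addr0.
  exact: hmeas.
have F01 p : 0 <= F p <= 1 := hloss01 _ _.
pose t := \tr Sigma.
pose B := Num.max L 0 * (eps * Num.sqrt t).
have hB : forall p i, `|F p - F (upd p.1 i p.2, p.2)| <= B.
  move=> [x z] i /=.
  apply: le_trans (hLip _ _ _) _.
  have dif : differ_at_most_one x (upd x i z).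
    by exists i => j ji; rewrite tnth_upd (negbTE ji).
  have nb := @norm_bound R K Sigma hSigma (A x - A (upd x i z)) eps heps (hstab _ _ dif).
  have Lm : L <= Num.max L 0 by rewrite le_max lexx.
  have M0 : 0 <= Num.max L 0 by rewrite le_max lexx orbT.
  apply: le_trans (ler_wpM2r _ Lm) _; first by rewrite /eucl_norm sqrtr_ge0.
  rewrite /B /t /=; exact: (ler_wpM2l M0 nb).
have g1 : gen P Pn loss A <= B := gen_bound P Pn hPn F mF F01 B m0 hB.
have g2 : gen P Pn loss A <= 1 :=
  gen_bound P Pn hPn F mF F01 1 m0 (fun p i => absB01 _ _ (F01 _) (F01 _)).
have y0 : 0 <= gen P Pn loss A by rewrite /gen normr_ge0.
move: g1 g2 y0; set y := gen P Pn loss A => g1 g2 y0.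
have [L0|L0] := leP 0 L; last first.
  have : B = 0 by rewrite /B (max_idPr (ltW L0)) mul0r.
  move=> B0; rewrite B0 in g1.
  by apply: le_trans g1 _; rewrite sqrtr_ge0.
have c1 : 1 <= n%:R / (n.-1)%:R :> R.
  by rewrite ler_pdivlMr ?ltr0n // mul1r ler_nat leq_pred.
have hX : 4 * (n%:R / (n.-1)%:R) * eps * L * Num.sqrt (\tr Sigma) =
    (4 * (n%:R / (n.-1)%:R)) * B by rewrite /B (max_idPl L0) /t; ring.
have B0 : 0 <= B by rewrite /B (max_idPl L0); apply: mulr_ge0 => //; apply: mulr_ge0 => //; exact: sqrtr_ge0.
rewrite hX.
have -> : y = Num.sqrt (y ^+ 2) by rewrite sqrtr_sqr ger0_norm.
apply: ler_wsqrtr.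
move: (n%:R / (n.-1)%:R) c1 => c c1.
nra.
Qed.
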